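(* Let $H$ be a $k$-linear Hopf category whose antipode maps $S_{xy}$ are all bijective, let $A$ be a right $H$-comodule category and $B=A^{{\rm co}H}$. Then all maps ${\rm can}'^{y}_{zx}$ ($x,y,z\in X$) are bijective if and only if all maps ${\rm can}^z_{xy}$ ($x,y,z\in X$) are bijective; i.e. $A$ is an $H$-Galois' category extension of $B$ if and only if it is an $H$-Galois category extension of $B$.
   Context: Let $k$ be a commutative ring; unadorned $\otimes$ is over $k$. A $k$-linear category $A$ with class of objects $X$ consists of $k$-modules $A_{xy}$, associative compositions $A_{xy}\otimes A_{yz}\to A_{xz}$, $a\otimes b\mapsto ab$, and units $1_x\in A_{xx}$. A $k$-linear semi-Hopf category $H$ (objects $X$) is a $k$-linear category in which each $H_{xy}$ is a $k$-coalgebra with $\Delta_{xy}(h)=h_{(1)}\otimes h_{(2)}$ and counit $\varepsilon_{xy}$, such that $\Delta_{xz}(hh')=h_{(1)}h'_{(1)}\otimes h_{(2)}h'_{(2)}$, $\Delta_{xx}(1_x)=1_x\otimes1_x$, $\varepsilon_{xz}(hh')=\varepsilon_{xy}(h)\varepsilon_{yz}(h')$, $\varepsilon_{xx}(1_x)=1$. It is a Hopf category if there are $k$-linear maps $S_{xy}:H_{xy}\to H_{yx}$ with $h_{(1)}S_{xy}(h_{(2)})=\varepsilon_{xy}(h)1_x$ and $S_{xy}(h_{(1)})h_{(2)}=\varepsilon_{xy}(h)1_y$. A right $H$-comodule category is a $k$-linear category $A$ with objects $X$ such that each $A_{xy}$ is a right $H_{xy}$-comodule, $\rho_{xy}(a)=a_{[0]}\otimes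 a_{[1]}$, with $\rho_{xz}(ab)=a_{[0]}b_{[0]}\otimes a_{[1]}b_{[1]}$ and $\rho_{xx}(1_x)=1_x\otimes1_x$. Its coinvariants are $B_x=\{a\in A_{xx}\mid\rho_{xx}(a)=a\otimes1_x\}$. The maps are ${\rm can}^z_{xy}:A_{zx}\otimes_{B_x}A_{xy}\to A_{zy}\otimes H_{xy}$, $a\otimes_{B_x}a'\mapsto aa'_{[0]}\otimes a'_{[1]}$, and ${\rm can}'^{y}_{zx}:A_{zx}\otimes_{B_x}A_{xy}\to A_{zy}\otimes H_{zx}$, $a\otimes_{B_x}a'\mapsto a_{[0]}a'\otimes a_{[1]}$. *)

(* Defs.v *)
From HB Require Import structures.
From mathcomp Require Import all_boot all_algebra.
Set Implicit Arguments.
Unset Strict Implicit.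
Unset Printing Implicit Defensive.
Import GRing.Theory.
Local Open Scope ring_scope.

Definition klinear (k : comPzRingType) (M N : lmodType k) (f : M -> N) : Prop :=
  forall (a : k) (u v : M), f (a *: u + v) = a *: f u + f v.

Definition kfunctional (k : comPzRingType) (M : lmodType k) (f : M -> k) : Prop :=
  forall (a : k) (u v : M), f (a *: u + v) = a * f u + f v.

Definition kbilinear (k : comPzRingType) (M N W : lmodType k)
  (f : M -> N -> W) : Prop :=
  (forall n, klinear (fun m => f m n)) /\ (forall m, klinear (f m)).

Definition ktrilinear (k : comPzRingType) (M N P W : lmodType k)
  (f : M -> N -> P -> W) : Prop :=
  [/\ forall n p, klinear (fun m => f m n p),
      forall m p, klinear (fun n => f m n p) &
      forall m n, klinear (f m n)].

(* [E m n m' n'] : the relation  m (x) n = m' (x) n'  is imposed *)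
Definition balanced (k : comPzRingType) (M N W : lmodType k)
  (E : M -> N -> M -> N -> Prop) (f : M -> N -> W) : Prop :=
  forall m n m' n', E m n m' n' -> f m n = f m' n'.

(* ---------- tensor products via universal property ----------
   [btensor M N E] is the quotient of M (x)_k N by the relations E, i.e. a
   k-module T with a bilinear E-balanced map [tmul] such that every
   k-bilinear E-balanced map f : M -> N -> W factors uniquely through a
   k-linear map T -> W.  [tlift f] is that factorisation (its value is
   unspecified when f is not bilinear and balanced). *)
Record btensor (k : comPzRingType) (M N : lmodType k)
  (E : M -> N -> M -> N -> Prop) := BTensor {
  tcar : lmodType k;
  tmul : M -> N -> tcar;
  tmul_bil : kbilinear tmul;
  tmul_bal : balanced E tmul;
  tlift : forall W : lmodType k, (M -> N -> W) -> tcar -> W;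
  tlift_lin : forall (W : lmodType k) (f : M -> N -> W),
      kbilinear f -> balanced E f -> klinear (tlift f);
  tlift_tmul : forall (W : lmodType k) (f : M -> N -> W),
      kbilinear f -> balanced E f -> forall m n, tlift f (tmul m n) = f m n;
  tlift_uniq : forall (W : lmodType k) (g : tcar -> W),
      klinear g -> forall t, g t = tlift (fun m n => g (tmul m n)) t
}.

Arguments btensor {k} M N E.

Definition no_rel (M N : Type) : M -> N -> M -> N -> Prop := fun _ _ _ _ => False.

Notation tensor M N := (btensor M N (@no_rel M N)).

Definition is_klinear_cat (k : comPzRingType) (X : Type) (C : X -> X -> lmodType k)
  (mul : forall x y z, C x y -> C y z -> C x z) (one : forall x, C x x) : Prop :=
  [/\ forall x y z, kbilinear (mul x y z),
      forall x y z w (a : C x y) (b : C y z) (c : C z w),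
        mul x z w (mul x y z a b) c = mul x y w a (mul y z w b c),
      forall x y (a : C x y), mul x x y (one x) a = a &
      forall x y (a : C x y), mul x y y a (one y) = a].

(* ---------- semi-Hopf and Hopf categories (Sweedler notation unfolded via
   the universal property of the tensor product) ---------- *)

Definition is_semihopf_cat (k : comPzRingType) (X : Type) (H : X -> X -> lmodType k)
  (hmul : forall x y z, H x y -> H y z -> H x z) (hone : forall x, H x x)
  (TH : forall x y, tensor (H x y) (H x y))
  (Delta : forall x y, H x y -> tcar (TH x y))
  (eps : forall x y, H x y -> k) : Prop :=
  [/\ is_klinear_cat hmul hone,
      [/\ forall x y, klinear (Delta x y),
          forall x y, kfunctional (eps x y),
          (* coassociativity: h(1)(1) (x) h(1)(2) (x) h(2) = h(1) (x) h(2)(1) (x) h(2)(2),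
             tested against every trilinear map *)
          forall x y (h : H x y) (W : lmodType k) (f : H x y -> H x y -> H x y -> W),
            ktrilinear f ->
            tlift (fun u v => tlift (fun a b => f a b v) (Delta x y u)) (Delta x y h)
            = tlift (fun u v => tlift (fun a b => f u a b) (Delta x y v)) (Delta x y h),
          forall x y (h : H x y),
            tlift (fun u v => eps x y u *: v) (Delta x y h) = h &
          forall x y (h : H x y),
            tlift (fun u v => eps x y v *: u) (Delta x y h) = h],
      (* Delta_xz(h h') = h(1) h'(1) (x) h(2) h'(2) *)
      forall x y z (h : H x y) (h' : H y z),
        Delta x z (hmul x y z h h')
        = tlift (fun a b =>
             tlift (fun c d => tmul (TH x z) (hmul x y z a c) (hmul x y z b d))
                   (Delta y z h'))
            (Delta x y h),
      forall x, Delta x x (hone x) = tmul (TH x x) (hone x) (hone x) &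
      [/\ forall x y z (h : H x y) (h' : H y z),
            eps x z (hmul x y z h h') = eps x y h * eps y z h' &
          forall x, eps x x (hone x) = 1]].

Definition is_antipode (k : comPzRingType) (X : Type) (H : X -> X -> lmodType k)
  (hmul : forall x y z, H x y -> H y z -> H x z) (hone : forall x, H x x)
  (TH : forall x y, tensor (H x y) (H x y))
  (Delta : forall x y, H x y -> tcar (TH x y))
  (eps : forall x y, H x y -> k) (S : forall x y, H x y -> H y x) : Prop :=
  [/\ forall x y, klinear (S x y),
      forall x y (h : H x y),
        tlift (fun a b => hmul x y x a (S x y b)) (Delta x y h) = eps x y h *: hone x &
      forall x y (h : H x y),
        tlift (fun a b => hmul y x y (S x y a) b) (Delta x y h) = eps x y h *: hone y].

Definition is_comodule_cat (k : comPzRingType) (X : Type) (H : X -> X -> lmodType k)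
  (hmul : forall x y z, H x y -> H y z -> H x z) (hone : forall x, H x x)
  (TH : forall x y, tensor (H x y) (H x y))
  (Delta : forall x y, H x y -> tcar (TH x y))
  (eps : forall x y, H x y -> k)
  (A : X -> X -> lmodType k)
  (amul : forall x y z, A x y -> A y z -> A x z) (aone : forall x, A x x)
  (TAH : forall x y z w, tensor (A x y) (H z w))
  (rho : forall x y, A x y -> tcar (TAH x y x y)) : Prop :=
  [/\ is_klinear_cat amul aone,
      [/\ forall x y, klinear (rho x y),
          (* a[0][0] (x) a[0][1] (x) a[1] = a[0] (x) a[1](1) (x) a[1](2) *)
          forall x y (a : A x y) (W : lmodType k) (f : A x y -> H x y -> H x y -> W),
            ktrilinear f ->
            tlift (fun u v => tlift (fun c h => f c h v) (rho x y u)) (rho x y a)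
            = tlift (fun u v => tlift (fun g h => f u g h) (Delta x y v)) (rho x y a) &
          forall x y (a : A x y),
            tlift (fun u v => eps x y v *: u) (rho x y a) = a],
      (* rho_xz(a b) = a[0] b[0] (x) a[1] b[1] *)
      forall x y z (a : A x y) (b : A y z),
        rho x z (amul x y z a b)
        = tlift (fun a0 a1 =>
             tlift (fun b0 b1 => tmul (TAH x z x z) (amul x y z a0 b0) (hmul x y z a1 b1))
                   (rho y z b))
            (rho x y a) &
      forall x, rho x x (aone x) = tmul (TAH x x x x) (aone x) (hone x)].

Definition coinv (k : comPzRingType) (X : Type) (H : X -> X -> lmodType k)
  (hone : forall x, H x x) (A : X -> X -> lmodType k)
  (TAH : forall x y z w, tensor (A x y) (H z w))
  (rho : forall x y, A x y -> tcar (TAH x y x y)) (x : X) (b : A x x) : Prop :=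
  rho x x b = tmul (TAH x x x x) b (hone x).

(* relations defining A_zx (x)_{B_x} A_xy :  (m' b) (x) n = m' (x) (b n), b in B_x *)
Definition Bbal (k : comPzRingType) (X : Type) (H : X -> X -> lmodType k)
  (hone : forall x, H x x) (A : X -> X -> lmodType k)
  (amul : forall x y z, A x y -> A y z -> A x z)
  (TAH : forall x y z w, tensor (A x y) (H z w))
  (rho : forall x y, A x y -> tcar (TAH x y x y)) (z x y : X)
  : A z x -> A x y -> A z x -> A x y -> Prop :=
  fun m n m' n' => exists b : A x x,
    [/\ @coinv k X H hone A TAH rho x b, m = amul z x x m' b & n' = amul x x y b n].

(* can^z_{xy} : A_zx (x)_{B_x} A_xy -> A_zy (x) H_xy,  a (x) a' |-> a a'[0] (x) a'[1] *)
Definition can_map (k : comPzRingType) (X : Type) (H : X -> X -> lmodType k)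
  (hone : forall x, H x x) (A : X -> X -> lmodType k)
  (amul : forall x y z, A x y -> A y z -> A x z)
  (TAH : forall x y z w, tensor (A x y) (H z w))
  (rho : forall x y, A x y -> tcar (TAH x y x y))
  (TB : forall z x y, btensor (A z x) (A x y) (@Bbal k X H hone A amul TAH rho z x y))
  (z x y : X) : tcar (TB z x y) -> tcar (TAH z y x y) :=
  tlift (fun (a : A z x) (a' : A x y) =>
    tlift (fun c h => tmul (TAH z y x y) (amul z x y a c) h) (rho x y a')).

(* can'^y_{zx} : A_zx (x)_{B_x} A_xy -> A_zy (x) H_zx,  a (x) a' |-> a[0] a' (x) a[1] *)
Definition can'_map (k : comPzRingType) (X : Type) (H : X -> X -> lmodType k)
  (hone : forall x, H x x) (A : X -> X -> lmodType k)
  (amul : forall x y z, A x y -> A y z -> A x z)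
  (TAH : forall x y z w, tensor (A x y) (H z w))
  (rho : forall x y, A x y -> tcar (TAH x y x y))
  (TB : forall z x y, btensor (A z x) (A x y) (@Bbal k X H hone A amul TAH rho z x y))
  (z x y : X) : tcar (TB z x y) -> tcar (TAH z y z x) :=
  tlift (fun (a : A z x) (a' : A x y) =>
    tlift (fun c h => tmul (TAH z y z x) (amul z x y c a') h) (rho z x a)).

(* Main.v *)
Require Import Defs.
From HB Require Import structures.
From mathcomp Require Import all_boot all_algebra.
From Stdlib Require Import FunctionalExtensionality.
Set Implicit Arguments.
Unset Strict Implicit.
Unset Printing Implicit Defensive.
Import GRing.Theory.
Local Open Scope ring_scope.

Section Gen.
Variable k : comPzRingType.

Lemma lin0 (M N : lmodType k) (f : M -> N) : klinear f -> f 0 = 0.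
Proof.
move=> Hf; have H := Hf 1 0 0; rewrite !scale1r addr0 in H.
have H2 : f 0 + f 0 = f 0 + 0 by rewrite addr0 -H.
exact: (addrI _ H2).
Qed.

Lemma linD (M N : lmodType k) (f : M -> N) u v : klinear f -> f (u + v) = f u + f v.
Proof. by move=> Hf; have := Hf 1 u v; rewrite !scale1r. Qed.

Lemma linZ (M N : lmodType k) (f : M -> N) (a : k) u : klinear f -> f (a *: u) = a *: f u.
Proof. by move=> Hf; have := Hf a u 0; rewrite !addr0 (lin0 Hf) addr0. Qed.

Lemma L_id (M : lmodType k) : klinear (fun u : M => u).
Proof. by []. Qed.

Lemma L_comp (M N P : lmodType k) (g : N -> P) (f : M -> N) :
  klinear g -> klinear f -> klinear (fun u => g (f u)).
Proof. by move=> Hg Hf a u v; rewrite Hf Hg. Qed.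

Lemma bilL (M N W : lmodType k) (f : M -> N -> W) : kbilinear f -> forall n, klinear (fun m => f m n).
Proof. by case. Qed.
Lemma bilR (M N W : lmodType k) (f : M -> N -> W) : kbilinear f -> forall m, klinear (f m).
Proof. by case. Qed.

Lemma L_bil_l (M N P W : lmodType k) (op : N -> P -> W) (f : M -> N) b :
  kbilinear op -> klinear f -> klinear (fun u => op (f u) b).
Proof. by move=> [H1 _] Hf; apply: (L_comp (H1 b) Hf). Qed.

Lemma L_bil_r (M N P W : lmodType k) (op : N -> P -> W) a (f : M -> P) :
  kbilinear op -> klinear f -> klinear (fun u => op a (f u)).
Proof. by move=> [_ H2] Hf; apply: (L_comp (H2 a) Hf). Qed.

Lemma L_scale_r (M N : lmodType k) (c : k) (f : M -> N) :
  klinear f -> klinear (fun u => c *: f u).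
Proof. by move=> Hf a u v; rewrite Hf scalerDr !scalerA mulrC. Qed.

Lemma L_scale_l (M N : lmodType k) (e : M -> k) (c : N) :
  kfunctional e -> klinear (fun u => e u *: c).
Proof. by move=> He a u v; rewrite He scalerDl scalerA. Qed.

Lemma L_lc (M N : lmodType k) (f g : M -> N) (c : k) :
  klinear f -> klinear g -> klinear (fun t => c *: f t + g t).
Proof.
move=> Hf Hg a u v; rewrite Hf Hg scalerDr !scalerA mulrC -!scalerA.
by rewrite scalerDr addrACA.
Qed.

Lemma bal_no (M N W : lmodType k) (f : M -> N -> W) : balanced (@no_rel M N) f.
Proof. by move=> ? ? ? ? []. Qed.

Section T.
Variables (M N : lmodType k) (E : M -> N -> M -> N -> Prop) (T : btensor M N E).

Lemma eq_tlift (W : lmodType k) (f g : M -> N -> W) t :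
  (forall m n, f m n = g m n) -> tlift (b:=T) f t = tlift g t.
Proof.
move=> H; have -> // : f = g.
by apply: functional_extensionality => m; apply: functional_extensionality => n.
Qed.

Lemma tensor_ext (W : lmodType k) (f g : tcar T -> W) :
  klinear f -> klinear g -> (forall m n, f (tmul T m n) = g (tmul T m n)) ->
  forall t, f t = g t.
Proof.
move=> Hf Hg H t; rewrite (tlift_uniq Hf) (tlift_uniq Hg).
exact: eq_tlift.
Qed.

Lemma tlift_comp (W W' : lmodType k) (L : W -> W') (f : M -> N -> W) :
  klinear L -> kbilinear f -> balanced E f ->
  forall t, L (tlift (b:=T) f t) = tlift (fun m n => L (f m n)) t.
Proof.
move=> HL Hf Hb; have Hf' : kbilinear (fun m n => L (f m n)).
  by case: Hf => H1 H2; split => ?; apply: L_comp.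
have Hb' : balanced E (fun m n => L (f m n)).
  by move=> m n m' n' /Hb ->.
apply: tensor_ext.
- exact: (L_comp HL (tlift_lin Hf Hb)).
- exact: (tlift_lin Hf' Hb').
- by move=> m n; rewrite !tlift_tmul.
Qed.

Lemma L_tlift_fun (U W : lmodType k) (F : U -> M -> N -> W) t :
  (forall u, kbilinear (F u)) -> (forall u, balanced E (F u)) ->
  (forall m n, klinear (fun u => F u m n)) -> klinear (fun u => tlift (b:=T) (F u) t).
Proof.
move=> Hb Hbal Hl a u v; move: t.
apply: (tensor_ext (f := fun t => tlift (F (a *: u + v)) t)
                   (g := fun t => a *: tlift (F u) t + tlift (F v) t)).
- exact: tlift_lin.
- by apply: L_lc; apply: tlift_lin.
- move=> m n /=; rewrite !tlift_tmul //; exact: Hl.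
Qed.

Lemma L_tlift_arg (U W : lmodType k) (F : M -> N -> W) (s : U -> tcar T) :
  kbilinear F -> balanced E F -> klinear s -> klinear (fun u => tlift (b:=T) F (s u)).
Proof. by move=> HF Hb Hs; apply: L_comp => //; apply: tlift_lin. Qed.

End T.

End Gen.

Ltac bal := solve [apply: bal_no | eauto].

Ltac lin :=
  lazymatch goal with |- klinear ?g =>
    let g' := eval cbv beta in (fun u => g u) in change (klinear g') end;
  first
  [ solve [eauto using tmul_bil, bilL, bilR]
  | match goal with
    | |- klinear (fun u => u) => exact: L_id
    | |- klinear (fun u => tlift ?F (@?s u)) =>
        refine (@L_tlift_arg _ _ _ _ _ _ _ F s _ _ _); [bil | bal | lin]
    | |- klinear (fun u => tlift (@?F u) ?t) =>
        refine (@L_tlift_fun _ _ _ _ _ _ _ F t _ _ _); [intro; bil | intro; bal | intros; lin]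
    | |- klinear (fun u => ?c *: (@?f u)) =>
        refine (@L_scale_r _ _ _ c f _); lin
    | |- klinear (fun u => (@?e u) *: ?c) =>
        refine (@L_scale_l _ _ _ e c _); solve [eauto]
    | |- klinear (fun u => ?op ?a (@?f u)) =>
        refine (@L_bil_r _ _ _ _ _ op a f _ _); [solve [eauto using tmul_bil] | lin]
    | |- klinear (fun u => ?op (@?f u) ?b) =>
        refine (@L_bil_l _ _ _ _ _ op f b _ _); [solve [eauto using tmul_bil] | lin]
    | |- klinear (fun u => ?g (@?f u)) =>
        refine (@L_comp _ _ _ _ g f _ _); [solve [eauto using tmul_bil, bilL, bilR] | lin]
    end ]
with bil := split; intro; lin.

Ltac tril := split; intros; lin.

Lemma tlift_swap (k : comPzRingType) (M1 N1 M2 N2 W : lmodType k)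
  (T1 : tensor M1 N1) (T2 : tensor M2 N2) (F : M1 -> N1 -> M2 -> N2 -> W) :
  (forall m n, kbilinear (F m n)) -> (forall p q, kbilinear (fun m n => F m n p q)) ->
  forall t s, tlift (b:=T1) (fun m n => tlift (b:=T2) (F m n) s) t
            = tlift (b:=T2) (fun p q => tlift (b:=T1) (fun m n => F m n p q) t) s.
Proof.
move=> H1 H2 t.
have L1 : forall p n, klinear (fun m => F m n p.1 p.2).
  by move=> p n; case: (H2 p.1 p.2).
have L2 : forall p m, klinear (fun n => F m n p.1 p.2).
  by move=> p m; case: (H2 p.1 p.2).
have L3 : forall m n q, klinear (fun p => F m n p q).
  by move=> m n q; case: (H1 m n).
have L4 : forall m n p, klinear (fun q => F m n p q).
  by move=> m n p; case: (H1 m n).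
apply: (tensor_ext (f := fun s => tlift (b:=T1) (fun m n => tlift (b:=T2) (F m n) s) t)
                   (g := fun s => tlift (b:=T2) (fun p q => tlift (b:=T1) (fun m n => F m n p q) t) s)).
- apply: L_tlift_fun.
  + move=> s; split => ? ; apply: L_tlift_fun => //; try (by move=> *; apply: bal_no).
    * by move=> m n; apply: (L1 (m, n)).
    * by move=> m n; apply: (L2 (m, n)).
  + by move=> *; apply: bal_no.
  + by move=> m n; apply: tlift_lin => //; apply: bal_no.
- apply: tlift_lin; last by apply: bal_no.
  split => ?; apply: L_tlift_fun => //; try (by move=> *; apply: bal_no).
- move=> p q /=; rewrite tlift_tmul //; try (by apply: bal_no).
  all: try (apply: eq_tlift => m n; rewrite tlift_tmul //; apply: bal_no).
  all: try (split => ?; apply: L_tlift_fun => //; try (by move=> *; apply: bal_no)).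
  all: try (by move=> m n; apply: (L1 (m, n))).
  all: try (by move=> m n; apply: (L2 (m, n))).
Qed.

Ltac sd := solve [bil | bal | lin].
Set Implicit Arguments.
Unset Strict Implicit.
Unset Printing Implicit Defensive.
Import GRing.Theory.
Local Open Scope ring_scope.

Theorem theorem3p14
  (k : comPzRingType) (X : Type)
  (* the Hopf category H *)
  (H : X -> X -> lmodType k)
  (hmul : forall x y z, H x y -> H y z -> H x z) (hone : forall x, H x x)
  (TH : forall x y, tensor (H x y) (H x y))
  (Delta : forall x y, H x y -> tcar (TH x y))
  (eps : forall x y, H x y -> k)
  (S : forall x y, H x y -> H y x)
  (HH : @is_semihopf_cat k X H hmul hone TH Delta eps)
  (HS : @is_antipode k X H hmul hone TH Delta eps S)
  (Sbij : forall x y, bijective (S x y))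
  (* the right H-comodule category A *)
  (A : X -> X -> lmodType k)
  (amul : forall x y z, A x y -> A y z -> A x z) (aone : forall x, A x x)
  (TAH : forall x y z w, tensor (A x y) (H z w))
  (rho : forall x y, A x y -> tcar (TAH x y x y))
  (HA : @is_comodule_cat k X H hmul hone TH Delta eps A amul aone TAH rho)
  (* the balanced tensor products A_zx (x)_{B_x} A_xy *)
  (TB : forall z x y, btensor (A z x) (A x y) (@Bbal k X H hone A amul TAH rho z x y)) :
  (forall x y z, bijective (@can'_map k X H hone A amul TAH rho TB z x y)) <->
  (forall x y z, bijective (@can_map k X H hone A amul TAH rho TB z x y)).
Proof.
case: HH => [[Hbil Hass Hl1 Hr1] [Dlin epsf Dco cuL cuR] Dmul D1 [emul e1]].
case: HS => [Slin antR antL].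
case: HA => [[Abil Aass Al1 Ar1] [rholin rhoco rhocu] rhomul rho1].
have balF : forall x y z, balanced (@Bbal k X H hone A amul TAH rho z x y)
   (fun a a' => tlift (fun c h => tmul (TAH z y x y) (amul z x y a c) h) (rho x y a')).
  move=> x y z m n m' n' [b [Hb -> ->]].
  rewrite rhomul Hb tlift_tmul. 2,3: sd.
  rewrite tlift_comp. 2-4: sd.
  apply: eq_tlift => b0 b1; rewrite tlift_tmul. 2-3: sd.
  by rewrite Hl1 Aass.
have balF' : forall x y z, balanced (@Bbal k X H hone A amul TAH rho z x y)
   (fun a a' => tlift (fun c h => tmul (TAH z y z x) (amul z x y c a') h) (rho z x a)).
  move=> x y z m n m' n' [b [Hb -> ->]].
  rewrite rhomul Hb tlift_comp. 2-4: sd.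
  apply: eq_tlift => a0 a1.
  rewrite tlift_tmul. 2-3: sd.
  rewrite tlift_tmul. 2-3: sd.
  by rewrite Hr1 Aass.
have canE : forall x y z a a', @can_map k X H hone A amul TAH rho TB z x y (tmul (TB z x y) a a')
   = tlift (fun c h => tmul (TAH z y x y) (amul z x y a c) h) (rho x y a').
  { move=> x y z a a'; rewrite /can_map tlift_tmul //. all: try sd. all: apply: balF. }
have can'E : forall x y z a a', @can'_map k X H hone A amul TAH rho TB z x y (tmul (TB z x y) a a')
   = tlift (fun c h => tmul (TAH z y z x) (amul z x y c a') h) (rho z x a).
  { move=> x y z a a'; rewrite /can'_map tlift_tmul //. all: try sd. all: apply: balF'. }
have canL : forall x y z, klinear (@can_map k X H hone A amul TAH rho TB z x y).
  { move=> x y z; apply: tlift_lin. sd. apply: balF. }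
have can'L : forall x y z, klinear (@can'_map k X H hone A amul TAH rho TB z x y).
  { move=> x y z; apply: tlift_lin. sd. apply: balF'. }
pose sig x y z := tlift (b := TAH z y x y) (fun b h => tmul (TAH z y y x) b (S x y h)).
pose Tm x y z := tlift (b := TAH z y y x) (fun b g =>
   tlift (fun c h => tmul (TAH z y z x) c (hmul z y x h g)) (rho z y b)).
pose Ti x y z := tlift (b := TAH z y z x) (fun b g =>
   tlift (fun c h => tmul (TAH z y y x) c (hmul y z x (S z y h) g)) (rho z y b)).
have sigL : forall x y z, klinear (sig x y z) by move=> x y z; rewrite /sig; sd.
have TmL : forall x y z, klinear (Tm x y z) by move=> x y z; rewrite /Tm; sd.
have TiL : forall x y z, klinear (Ti x y z) by move=> x y z; rewrite /Ti; sd.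
have sigE : forall x y z b h, sig x y z (tmul _ b h) = tmul (TAH z y y x) b (S x y h).
  by move=> x y z b h; rewrite /sig tlift_tmul //; sd.
have TmE : forall x y z b g, Tm x y z (tmul _ b g) =
   tlift (fun c h => tmul (TAH z y z x) c (hmul z y x h g)) (rho z y b).
  by move=> x y z b g; rewrite /Tm tlift_tmul //; sd.
have TiE : forall x y z b g, Ti x y z (tmul _ b g) =
   tlift (fun c h => tmul (TAH z y y x) c (hmul y z x (S z y h) g)) (rho z y b).
  by move=> x y z b g; rewrite /Ti tlift_tmul //; sd.
have key : forall x y z t, @can'_map k X H hone A amul TAH rho TB z x y t
   = Tm x y z (sig x y z (@can_map k X H hone A amul TAH rho TB z x y t)).
{ move=> x y z.
  apply: (tensor_ext (f := @can'_map k X H hone A amul TAH rho TB z x y)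
    (g := fun t => Tm x y z (sig x y z (@can_map k X H hone A amul TAH rho TB z x y t)))).
  1,2: sd.
  move=> a a'; rewrite can'E canE.
  rewrite (tlift_comp (L := sig x y z)). 2-4: sd.
  rewrite (tlift_comp (L := Tm x y z)). 2-4: sd.
  symmetry.
  transitivity (tlift (fun c h => tlift (fun a0 a1 => tlift (fun c0 c1 =>
     tmul (TAH z y z x) (amul z x y a0 c0) (hmul z x x a1 (hmul x y x c1 (S x y h))))
       (rho x y c)) (rho z x a)) (rho x y a')).
  { apply: eq_tlift => c h.
    rewrite sigE TmE rhomul tlift_comp. 2-4: sd.
    apply: eq_tlift => a0 a1.
    rewrite tlift_comp. 2-4: sd.
    apply: eq_tlift => c0 c1.
    rewrite tlift_tmul. 2-3: sd.
    by rewrite Hass. }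
  rewrite tlift_swap. 2-3: by move=> *; sd.
  apply: eq_tlift => a0 a1.
  rewrite (rhoco x y a' _ (fun c0 c1 h => tmul (TAH z y z x) (amul z x y a0 c0)
         (hmul z x x a1 (hmul x y x c1 (S x y h))))).
  2: tril.
  transitivity (tlift (fun c h => tmul (TAH z y z x) (amul z x y a0 (eps x y h *: c)) a1) (rho x y a')).
  { apply: eq_tlift => c h.
    transitivity (tmul (TAH z y z x) (amul z x y a0 c) (hmul z x x a1
       (tlift (fun g1 g2 => hmul x y x g1 (S x y g2)) (Delta x y h)))).
    { symmetry; apply: (tlift_comp (L := fun w => tmul (TAH z y z x) (amul z x y a0 c) (hmul z x x a1 w))).
      all: sd. }
    rewrite antR.
    rewrite (linZ (f := hmul z x x a1)); last sd.
    rewrite (linZ (f := amul z x y a0)); last sd.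
    rewrite (linZ (f := tmul (TAH z y z x) (amul z x y a0 c))); last sd.
    rewrite (linZ (f := fun u => tmul (TAH z y z x) u a1)); last sd.
    by rewrite Hr1. }
  rewrite -(tlift_comp (L := fun w => tmul (TAH z y z x) (amul z x y a0 w) a1)). 2-4: sd.
  by rewrite rhocu. }
have TTi : forall x y z t, Tm x y z (Ti x y z t) = t.
{ move=> x y z.
  apply: (tensor_ext (f := fun t => Tm x y z (Ti x y z t)) (g := fun t => t)).
  1,2: sd.
  move=> b g; rewrite TiE tlift_comp. 2-4: sd.
  transitivity (tlift (fun c h => tlift (fun d h' => tmul (TAH z y z x) d
      (hmul z y x h' (hmul y z x (S z y h) g))) (rho z y c)) (rho z y b)).
  { by apply: eq_tlift => c h; rewrite TmE. }
  rewrite (rhoco z y b _ (fun d h' h => tmul (TAH z y z x) d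
      (hmul z y x h' (hmul y z x (S z y h) g)))).
  2: tril.
  transitivity (tlift (fun c h => tmul (TAH z y z x) (eps z y h *: c) g) (rho z y b)).
  { apply: eq_tlift => c h.
    transitivity (tmul (TAH z y z x) c (hmul z z x
       (tlift (fun g1 g2 => hmul z y z g1 (S z y g2)) (Delta z y h)) g)).
    { transitivity (tlift (fun g1 g2 => (fun w => tmul (TAH z y z x) c (hmul z z x w g))
           (hmul z y z g1 (S z y g2))) (Delta z y h)).
      { by apply: eq_tlift => g1 g2; rewrite Hass. }
      symmetry; apply: (tlift_comp (L := fun w => tmul (TAH z y z x) c (hmul z z x w g))).
      all: sd. }
    rewrite antR.
    rewrite (linZ (f := fun u => hmul z z x u g)); last sd.
    rewrite Hl1.
    rewrite (linZ (f := tmul (TAH z y z x) c)); last sd.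
    by rewrite (linZ (f := fun u => tmul (TAH z y z x) u g)); last sd. }
  rewrite -(tlift_comp (L := fun w => tmul (TAH z y z x) w g)). 2-4: sd.
  by rewrite rhocu. }
have TiT : forall x y z t, Ti x y z (Tm x y z t) = t.
{ move=> x y z.
  apply: (tensor_ext (f := fun t => Ti x y z (Tm x y z t)) (g := fun t => t)).
  1,2: sd.
  move=> b g; rewrite TmE tlift_comp. 2-4: sd.
  transitivity (tlift (fun c h => tlift (fun d h' => tmul (TAH z y y x) d
      (hmul y z x (S z y h') (hmul z y x h g))) (rho z y c)) (rho z y b)).
  { by apply: eq_tlift => c h; rewrite TiE. }
  rewrite (rhoco z y b _ (fun d h' h => tmul (TAH z y y x) d
      (hmul y z x (S z y h') (hmul z y x h g)))).
  2: tril.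
  transitivity (tlift (fun c h => tmul (TAH z y y x) (eps z y h *: c) g) (rho z y b)).
  { apply: eq_tlift => c h.
    transitivity (tmul (TAH z y y x) c (hmul y y x
       (tlift (fun g1 g2 => hmul y z y (S z y g1) g2) (Delta z y h)) g)).
    { transitivity (tlift (fun g1 g2 => (fun w => tmul (TAH z y y x) c (hmul y y x w g))
           (hmul y z y (S z y g1) g2)) (Delta z y h)).
      { by apply: eq_tlift => g1 g2; rewrite Hass. }
      symmetry; apply: (tlift_comp (L := fun w => tmul (TAH z y y x) c (hmul y y x w g))).
      all: sd. }
    rewrite antL.
    rewrite (linZ (f := fun u => hmul y y x u g)); last sd.
    rewrite Hl1.
    rewrite (linZ (f := tmul (TAH z y y x) c)); last sd.
    by rewrite (linZ (f := fun u => tmul (TAH z y y x) u g)); last sd. }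
  rewrite -(tlift_comp (L := fun w => tmul (TAH z y y x) w g)). 2-4: sd.
  by rewrite rhocu. }
have sigB : forall x y z, bijective (sig x y z).
{ move=> x y z; case: (Sbij x y) => Si SK KS.
  have SiL : klinear Si.
  { move=> r u v; apply: (can_inj SK).
    by rewrite KS Slin !KS. }
  exists (tlift (b := TAH z y y x) (fun b h => tmul (TAH z y x y) b (Si h))).
  - apply: (tensor_ext (f := fun t => tlift (b := TAH z y y x)
        (fun b h => tmul (TAH z y x y) b (Si h)) (sig x y z t)) (g := fun t => t)).
    1,2: sd.
    move=> b h; rewrite sigE tlift_tmul. 2-3: sd.
    by rewrite SK.
  - apply: (tensor_ext (g := fun t => t)).
    1,2: sd.
    move=> b h; rewrite tlift_tmul. 2-3: sd.
    by rewrite sigE KS. }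
split => Hb x y z.
- case: (sigB x y z) => si sK Ks.
  have Bsi : bijective si by exists (sig x y z).
  have BTi : bijective (Ti x y z) by exists (Tm x y z).
  apply: (eq_bij (bij_comp Bsi (bij_comp BTi (Hb x y z)))).
  by move=> t /=; rewrite key TiT sK.
- have BTm : bijective (Tm x y z) by exists (Ti x y z).
  apply: (eq_bij (bij_comp BTm (bij_comp (sigB x y z) (Hb x y z)))).
  by move=> t /=; rewrite key.
Qed.
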